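(* Let $\mathcal{F}$ be a saturated fusion system over a finite $p$-group $S$, and let $P\le Q\le S$ be such that $P\trianglelefteq\mathcal{F}$ and $Q/P\trianglelefteq\mathcal{F}/P$. If $Q$ is abelian, or if $P\le Z(\mathcal{F})$, then $Q\trianglelefteq\mathcal{F}$.
   Context: A fusion system $\mathcal{F}$ over a finite $p$-group $S$ is a category whose objects are the subgroups of $S$, with $\mathrm{Hom}_S(P,Q)\subseteq\mathrm{Hom}_{\mathcal{F}}(P,Q)\subseteq\mathrm{Inj}(P,Q)$, every morphism an isomorphism in $\mathcal{F}$ followed by an inclusion; saturation is given by Puig's Sylow and extension axioms. A subgroup $Q\le S$ is normal in $\mathcal{F}$ ($Q\trianglelefteq\mathcal{F}$) if every morphism of $\mathcal{F}$ extends to a morphism of $\mathcal{F}$ sending $Q$ to itself; it is central if every morphism extends to one sending $Q$ to itself via the identity, and $Z(\mathcal{F})$ is the largest central subgroup. For $P\trianglelefteq\mathcal{F}$, $\mathcal{F}/P$ is the fusion system over $S/P$ whose morphisms $R_1/P\to R_2/P$ (for $P\le R_1,R_2\le S$) are the maps induced by morphisms $\varphi\in\mathrm{Hom}_{\mathcal{F}}(R_1,R_2)$. *)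

(* Defs.v *)
From mathcomp Require Import all_boot all_fingroup all_solvable.
Set Implicit Arguments. Unset Strict Implicit. Unset Printing Implicit Defensive.
Import GroupScope.

Section Fusion.
Variable gT : finGroupType.

(* A fusion system over S is given by its hom-predicate:
   [hom P Q f] means "f (restricted to P) is in Hom_F(P,Q)".  Morphisms are
   represented by total functions gT -> gT; only their values on P matter. *)
Definition fhom_pred := {set gT} -> {set gT} -> (gT -> gT) -> Prop.

Definition is_fusion_system (S : {set gT}) (hom : fhom_pred) : Prop :=
  [/\
      (forall P Q f, hom P Q f ->
         [/\ group_set P /\ group_set Q, P \subset S /\ Q \subset S,
             {in P &, {morph f : x y / x * y}},
             {in P &, injective f} & f @: P \subset Q]),
      (* morphisms are maps on their domain: representatives agreeing on P *)
      (forall P Q f g, hom P Q f -> {in P, f =1 g} -> hom P Q g),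
      (forall (P Q : {group gT}) g, P \subset S -> Q \subset S -> g \in S ->
         P :^ g \subset Q -> hom P Q (fun x => x ^ g)),
      (forall P Q R f g, hom P Q f -> hom Q R g -> hom P R (g \o f)) &
      (forall P Q f, hom P Q f ->
         hom P (f @: P) f /\ exists g, hom (f @: P) P g /\ {in P, cancel f g})].

Definition AutS (S Q : {set gT}) : {set {perm gT}} :=
  [set a in Aut Q | [exists g in 'N_S(Q), [forall x in Q, a x == x ^ g]]].

Definition fully_normalized (S : {set gT}) (hom : fhom_pred) (Q : {set gT}) :=
  forall f, hom Q S f -> #|'N_S(f @: Q)| <= #|'N_S(Q)|.

Definition fully_centralized (S : {set gT}) (hom : fhom_pred) (Q : {set gT}) :=
  forall f, hom Q S f -> #|'C_S(f @: Q)| <= #|'C_S(Q)|.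

(* N_phi = { g in N_S(Q) | phi c_g phi^-1 in Aut_S(phi(Q)) } *)
Definition Nphi (S Q : {set gT}) (f : gT -> gT) : {set gT} :=
  [set g in 'N_S(Q) |
     [exists h in 'N_S(f @: Q), [forall x in Q, f (x ^ g) == f x ^ h]]].

Definition saturated_fusion_system (p : nat) (S : {group gT}) (hom : fhom_pred) :=
  [/\ is_fusion_system S hom,
      (forall Q : {group gT}, Q \subset S -> fully_normalized S hom Q ->
         fully_centralized S hom Q /\
         exists AF : {set {perm gT}},
           (forall a : {perm gT}, a \in AF <-> (a \in Aut Q /\ hom Q Q a)) /\
           p.-Sylow(AF) (AutS S Q)) &
      (forall (Q : {group gT}) f, hom Q S f -> fully_centralized S hom (f @: Q) ->
         exists g, hom (Nphi S Q f) S g /\ {in Q, g =1 f})].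

Definition fnormal (S : {set gT}) (hom : fhom_pred) (Q : {set gT}) :=
  Q \subset S /\
  forall A B f, hom A B f ->
    exists A' B' g, [/\ hom A' B' g, A \subset A', Q \subset A',
                        {in A, g =1 f} & g @: Q = Q].

Definition fcentral (S : {set gT}) (hom : fhom_pred) (Q : {set gT}) :=
  Q \subset S /\
  forall A B f, hom A B f ->
    exists A' B' g, [/\ hom A' B' g, A \subset A', Q \subset A',
                        {in A, g =1 f} & {in Q, g =1 id}].

Definition is_fcenter (S : {set gT}) (hom : fhom_pred) (Z : {group gT}) :=
  fcentral S hom Z /\ forall R : {group gT}, fcentral S hom R -> R \subset Z.

Definition quotient_hom (P : {group gT}) (hom : fhom_pred) :
  {set coset_of P} -> {set coset_of P} -> (coset_of P -> coset_of P) -> Prop :=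
  fun A B f => exists (R1 R2 : {group gT}) (phi : gT -> gT),
    [/\ P \subset R1 /\ P \subset R2, hom R1 R2 phi, R1 / P = A, R2 / P = B &
        {in R1, forall x, f (coset P x) = coset P (phi x)}].

End Fusion.
Arguments quotient_hom [gT] P hom _ _ _.

(* Main.v *)
Require Import Defs.
From mathcomp Require Import all_boot all_fingroup all_solvable.
Import GroupScope.
From mathcomp Require Import zify.
From Stdlib Require Import Classical.
Set Implicit Arguments. Unset Strict Implicit. Unset Printing Implicit Defensive.

Section Basic.
Variables (gT : finGroupType) (S : {group gT}) (hom : fhom_pred gT).
Hypothesis Hfs : is_fusion_system S hom.

Lemma homP A B f : hom A B f ->
  [/\ group_set A /\ group_set B, A \subset S /\ B \subset S,
      {in A &, {morph f : x y / x * y}}, {in A &, injective f} & f @: A \subset B].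
Proof. by case: Hfs => H _ _ _ _ /H. Qed.

Lemma hom_eq A B f g : hom A B f -> {in A, f =1 g} -> hom A B g.
Proof. by case: Hfs => _ H _ _ _; apply: H. Qed.

Lemma hom_conj (A B : {group gT}) g : A \subset S -> B \subset S -> g \in S ->
  A :^ g \subset B -> hom A B (fun x => x ^ g).
Proof. by case: Hfs => _ _ H _ _; apply: H. Qed.

Lemma hom_comp A B C f g : hom A B f -> hom B C g -> hom A C (g \o f).
Proof. by case: Hfs => _ _ _ H _; apply: H. Qed.

Lemma hom_im A B f : hom A B f -> hom A (f @: A) f.
Proof. by case: Hfs => _ _ _ _ H /H []. Qed.

Lemma hom_inv A B f : hom A B f ->
  exists g, [/\ hom (f @: A) A g, {in A, cancel f g} & {in f @: A, cancel g f}].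
Proof.
case: Hfs => _ _ _ _ H /H [_ [g [hg cg]]]; exists g; split => //.
by move=> _ /imsetP[x Ax ->]; rewrite cg.
Qed.

Lemma hom_res A B f A' : hom A B f -> group_set A' -> A' \subset A -> hom A' B f.
Proof.
move=> h gA' sA'A; have [[gA _] [sAS _] _ _ _] := homP h.
have h1 := @hom_conj (group gA') (group gA) 1 (subset_trans sA'A sAS) sAS (group1 _).
rewrite /= conjsg1 in h1; have := hom_comp (h1 sA'A) h.
by move/hom_eq; apply => x _ /=; rewrite conjg1.
Qed.

Lemma hom_wid A B f B' : hom A B f -> group_set B' -> B \subset B' -> B' \subset S ->
  hom A B' f.
Proof.
move=> h gB' sBB' sB'S; have [[_ gB] [_ sBS] _ _ _] := homP h.
have h1 := @hom_conj (group gB) (group gB') 1 sBS sB'S (group1 _).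
rewrite /= conjsg1 in h1; have := hom_comp h (h1 sBB').
by move/hom_eq; apply => x _ /=; rewrite conjg1.
Qed.

Lemma hom1 A B f : hom A B f -> f 1 = 1.
Proof.
move=> h; have [[gA _] _ fM _ _] := homP h.
have A1 : 1 \in A by rewrite (group1 (group gA)).
by apply: (mulgI (f 1)); rewrite -fM // !mulg1.
Qed.

Lemma homV A B f x : hom A B f -> x \in A -> f x^-1 = (f x)^-1.
Proof.
move=> h Ax; have [[gA _] _ fM _ _] := homP h.
have Ax' : x^-1 \in A by rewrite (groupV (group gA)).
by apply: (mulgI (f x)); rewrite -fM // mulgV mulgV (hom1 h).
Qed.

Lemma homJ A B f x y : hom A B f -> x \in A -> y \in A -> f (x ^ y) = f x ^ f y.
Proof.
move=> h Ax Ay; have [[gA _] _ fM _ _] := homP h.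
have Ay' : y^-1 \in A by rewrite (groupV (group gA)).
have Axy : x * y \in A by rewrite (@groupM _ (group gA)).
by rewrite /conjg fM // fM // (homV h).
Qed.

Lemma hom_in A B f x : hom A B f -> x \in A -> f x \in B.
Proof. by move=> h Ax; have [_ _ _ _ /subsetP] := homP h; apply; apply: imset_f. Qed.

Lemma hom_card A B f : hom A B f -> #|f @: A| = #|A|.
Proof. by move=> h; have [_ _ _ inj _] := homP h; rewrite card_in_imset. Qed.

Lemma hom_imG A B f : hom A B f -> group_set (f @: A).
Proof. by move/hom_im/homP => [[]]. Qed.

End Basic.

Lemma pgroup_exp (T : finGroupType) (p : nat) (G : {group T}) n :
  p.-nat n -> (forall x, x \in G -> x ^+ n = 1) -> p.-group G.
Proof.
move=> pn Hx; apply/pgroupP => q pq qG.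
have [x Gx ox] := Cauchy pq qG.
have : q %| n by rewrite -ox order_dvdn Hx.
by move=> qn; rewrite -(pnatE _ pq); apply: pnat_dvd qn pn.
Qed.

Section Syl.
Variables (gT : finGroupType) (p : nat) (S : {group gT}) (hom : fhom_pred gT).
Hypothesis Hsat : saturated_fusion_system p S hom.
Hypothesis pS : p.-group S.
Let Hfs : is_fusion_system S hom. Proof. by case: Hsat. Qed.

Lemma AutS_group_set (C : {group gT}) : group_set (AutS S C).
Proof.
apply/group_setP; split.
  apply/setIdP; split; first exact: group1. apply/existsP; exists 1; rewrite group1.
  by apply/forallP => x; apply/implyP => _; rewrite perm1 conjg1.
move=> a b /setIdP[Aa /existsP[g /andP[Ng /forallP Hg]]].
move=> /setIdP[Ab /existsP[h /andP[Nh /forallP Hh]]].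
apply/setIdP; split; first exact: (groupM Aa Ab). apply/existsP; exists (g * h); rewrite groupM //.
apply/forallP => x; apply/implyP => Cx; rewrite permM.
move: (implyP (Hg x) Cx) => /eqP ->.
have Cxg : x ^ g \in C by rewrite memJ_norm //; case/setIP: Ng.
by move: (implyP (Hh _) Cxg) => /eqP ->; rewrite conjgM.
Qed.

Canonical AutS_group (C : {group gT}) := group (AutS_group_set C).

Lemma AF_group_set (C : {group gT}) (AF : {set {perm gT}}) :
  C \subset S ->
  (forall a : {perm gT}, a \in AF <-> (a \in Aut C /\ hom C C a)) -> group_set AF.
Proof.
move=> sCS HAF; apply/group_setP; split.
  apply/HAF; split; first exact: group1.
  have h1 : C :^ 1 \subset C by rewrite conjsg1.
  have := hom_conj Hfs sCS sCS (group1 _) h1.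
  move/(hom_eq Hfs); apply.
  by move=> x _; rewrite perm1 conjg1.
move=> a b /HAF[Aa ha] /HAF[Ab hb]; apply/HAF; split; first exact: groupM.
by move: (hom_comp Hfs ha hb) => /(hom_eq Hfs); apply => x _; rewrite permM.
Qed.

Lemma stab_AutS (C W : {group gT}) (b : {perm gT}) :
  C \subset S -> fully_normalized S hom C -> W \subset C ->
  (forall f, hom C C f -> forall w, w \in W -> f w \in W) ->
  b \in Aut C -> hom C C b ->
  (forall x, x \in C -> x^-1 * b x \in W) -> (forall w, w \in W -> b w = w) ->
  b \in AutS S C.
Proof.
move=> sCS fnC sWC clW Ab hb bC bW.
case: Hsat => _ /(_ C sCS fnC) [_ [AF [HAF sylAF]]] _.
have gAF := AF_group_set sCS HAF.
pose AFg := group gAF.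
pose Bs := [set c in AFg | [forall x in C, x^-1 * c x \in W] && [forall w in W, c w == w]].
have BsP c : reflect [/\ c \in AFg, (forall x, x \in C -> x^-1 * c x \in W) &
                        (forall w, w \in W -> c w = w)] (c \in Bs).
  rewrite inE; apply: (iffP and3P) => [[c1 /forall_inP c2 /forall_inP c3]|[c1 c2 c3]].
    by split => // w /c3 /eqP.
  by split => //; apply/forall_inP => // w /c3 ->.
have gBs : group_set Bs.
  apply/group_setP; split.
    apply/BsP; split; first exact: group1.
      by move=> x _; rewrite perm1 mulVg group1.
    by move=> w _; rewrite perm1.
  move=> c d /BsP[c1 c2 c3] /BsP[d1 d2 d3]; apply/BsP; split; first exact: groupM.
    move=> x Cx; rewrite permM.
    have [Ac _] : c \in Aut C /\ hom C C c by apply/HAF.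
    have Ccx : c x \in C by rewrite Aut_closed.
    have -> : x^-1 * d (c x) = (x^-1 * c x) * ((c x)^-1 * d (c x)).
      by rewrite !mulgA mulgK.
    by rewrite groupM ?c2 ?d2.
  by move=> w Ww; rewrite permM c3 // d3.
pose Bg := group gBs.
have pB : p.-group Bg.
  apply: (@pgroup_exp _ _ _ #|W|).
    exact: pgroupS (subset_trans sWC sCS) pS.
  move=> c /BsP[c1 c2 c3]; apply/permP => x; rewrite perm1.
  have [Ac _] : c \in Aut C /\ hom C C c by apply/HAF.
  have [Cx|nCx] := boolP (x \in C); last by rewrite permX_fix // (out_Aut Ac).
  have Wd := c2 x Cx; set dl := x^-1 * c x in Wd.
  have cx : c x = x * dl by rewrite /dl mulKVg.
  have it n : (c ^+ n) x = x * dl ^+ n.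
    elim: n => [|n IH]; first by rewrite expg0 perm1 mulg1.
    rewrite expgSr permM IH.
    have Cdn : dl ^+ n \in C by rewrite groupX // (subsetP sWC).
    have := Aut_morphic Ac => /morphicP ->; rewrite // cx (c3 _ (groupX n Wd)).
    by rewrite -mulgA -expgS.
  by rewrite it expg_cardG // mulg1.
have nB : Bg <| AFg.
  apply/andP; split; first by apply/subsetP => c /BsP[].
  apply/subsetP => g Ag; rewrite inE; apply/subsetP => y.
  rewrite mem_conjg => /BsP[c1 c2 c3].
  have -> : y = (y ^ g^-1) ^ g by rewrite conjgKV.
  move: (y ^ g^-1) c1 c2 c3 => c c1 c2 c3.
  have [Ag' hg] : g \in Aut C /\ hom C C g by apply/HAF.
  have [Agi hgi] : g^-1 \in Aut C /\ hom C C g^-1 by apply/HAF; have := @groupV _ AFg g; rewrite Ag; apply.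
  have [Ac _] : c \in Aut C /\ hom C C c by apply/HAF.
  have cJ z : (c ^ g) z = g (c (g^-1 z)) by rewrite -permJ permKV.
  apply/BsP; split; first by rewrite groupJ.
    move=> x Cx; rewrite cJ.
    have Cy : g^-1 x \in C by rewrite Aut_closed.
    have Ccy : c (g^-1 x) \in C by rewrite Aut_closed.
    have {1}-> : x = g (g^-1 x) by rewrite permKV.
    have := Aut_morphic Ag' => /morphicP gM.
    rewrite -(homV Hfs hg Cy) -gM ?groupV //; apply: clW hg _ _.
    exact: c2.
  move=> w Ww; rewrite cJ c3 ?permKV //.
  exact: clW hgi _ _.
have sBA : Bs \subset AutS S C.
  exact: normal_sub_max_pgroup (Hall_max (G:=AFg) (H:=AutS_group C) sylAF) pB nB.
apply: (subsetP sBA); apply/BsP; split => //; exact/HAF.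
Qed.

End Syl.

Section Main.
Variables (gT : finGroupType) (p : nat) (S : {group gT}) (hom : fhom_pred gT).
Variables (P Q : {group gT}).
Hypothesis pS : p.-group S.
Hypothesis Hsat : saturated_fusion_system p S hom.
Hypothesis sPQ : P \subset Q.
Hypothesis sQS : Q \subset S.
Hypothesis nP : fnormal S hom P.
Hypothesis nQP : fnormal (S / P) (quotient_hom P hom) (Q / P).
Let Hfs : is_fusion_system S hom. Proof. by case: Hsat. Qed.

Lemma sPS : P \subset S. Proof. exact: subset_trans sPQ sQS. Qed.

Lemma P_closed A B f x : hom A B f -> x \in A -> x \in P -> f x \in P.
Proof.
move=> h Ax Px; case: nP => _ /(_ _ _ _ h) [A' [B' [g [_ _ sPA' eqgf gP]]]].
by rewrite -eqgf // -gP imset_f.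
Qed.

Lemma hom_P A B f : hom A B f -> P \subset A -> f @: P = P.
Proof.
move=> h sPA; apply/eqP; rewrite eqEcard; apply/andP; split.
  by apply/subsetP => _ /imsetP[x Px ->]; apply: P_closed h (subsetP sPA x Px) Px.
have [_ _ _ inj _] := homP Hfs h.
by rewrite card_in_imset // => x y /(subsetP sPA) ? /(subsetP sPA) ?; apply: inj.
Qed.

Lemma conj_hom (s : gT) : s \in S -> hom S S (fun x => x ^ s).
Proof.
move=> Ss; have e : S :^ s \subset S by rewrite conjGid.
exact: (hom_conj Hfs (subxx _) (subxx _) Ss e).
Qed.

Lemma nPS : S \subset 'N(P).
Proof.
apply/subsetP => s Ss; rewrite inE; apply/subsetP => _ /imsetP[z Pz ->].
exact: P_closed (conj_hom Ss) (subsetP sPS z Pz) Pz.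
Qed.

Lemma PnR (R : {group gT}) : P \subset R -> R \subset S -> P <| R.
Proof. by move=> sPR sRS; rewrite /normal sPR (subset_trans sRS nPS). Qed.

(* lifting to the quotient and back *)
Lemma quot_ext (A : {group gT}) B f : hom A B f -> P \subset A ->
  exists (R1 R2 : {group gT}) psi,
    [/\ hom R1 R2 psi, A \subset R1 /\ Q \subset R1,
        forall x, x \in A -> (f x)^-1 * psi x \in P,
        forall q, q \in Q -> psi q \in Q & R2 \subset S].
Proof.
move=> h sPA.
have hi := hom_im Hfs h; have gB := hom_imG Hfs h.
pose B1 := group gB.
have sPB1 : P \subset B1 by rewrite /= -(hom_P h sPA) imsetS.
have [[_ _] [sAS sB1S] fM _ _] := homP Hfs hi.
have nPA : A \subset 'N(P) := subset_trans sAS nPS.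
pose fb := fun c : coset_of P => coset P (f (repr c)).
have fbE : {in A, forall x, fb (coset P x) = coset P (f x)}.
  move=> x Ax; rewrite /fb.
  have Nx : x \in 'N(P) by apply: (subsetP nPA).
  have : repr (coset P x) \in P :* x.
    by rewrite -val_coset //; apply: (mem_repr x); rewrite val_coset // rcoset_refl.
  case/rcosetP => z Pz ->.
  have Az : z \in A by apply: (subsetP sPA).
  have Pfz : f z \in P := P_closed h Az Pz.
  have Nfz : f z \in 'N(P) := subsetP nPS _ (subsetP sPS _ Pfz).
  have Nfx : f x \in 'N(P).
    by apply: (subsetP nPS); apply: (subsetP sB1S); apply: imset_f.
  rewrite fM // morphM //; have -> : coset_morphism P (f z) = 1 := coset_id Pfz; exact: mul1g.
have hq : quotient_hom P hom (A / P) (B1 / P) fb.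
  by exists A, B1, f; split.
case: nQP => _ /(_ _ _ _ hq) [A' [B' [g [hg sAA' sQA' eqg gQ]]]].
case: hg => R1 [R2 [psi [[sPR1 sPR2] hpsi defA' defB' gpsi]]].
have [[_ _] [sR1S sR2S] _ _ _] := homP Hfs hpsi.
have gR1 : group_set R1 by case: (homP Hfs hpsi) => [[]].
exists R1, R2, psi; split => //.
- split; first by rewrite -(quotientSGK nPA sPR1) defA'.
  by rewrite -(quotientSGK (subset_trans sQS nPS) sPR1) defA'.
- move=> x Ax.
  have R1x : x \in R1 by apply: (subsetP _ x Ax); rewrite -(quotientSGK nPA sPR1) defA'.
  have Nfx : f x \in 'N(P) by apply: (subsetP nPS); apply: (subsetP sB1S); apply: imset_f.
  have Npx : psi x \in 'N(P) := subsetP nPS _ (subsetP sR2S _ (hom_in Hfs hpsi R1x)).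
  apply: coset_idr; first by rewrite groupM ?groupV.
  have e1 : coset P (psi x) = coset P (f x).
    by rewrite -gpsi // eqg ?mem_quotient // fbE.
  rewrite morphM ?groupV // morphV //.
  by change ((coset P (f x))^-1 * coset P (psi x) = 1); rewrite e1 mulVg.
- move=> q Qq.
  have R1q : q \in R1 by apply: (subsetP _ q Qq); rewrite -(quotientSGK (subset_trans sQS nPS) sPR1) defA'.
  have Npq : psi q \in 'N(P) := subsetP nPS _ (subsetP sR2S _ (hom_in Hfs hpsi R1q)).
  rewrite -(quotientGK (PnR sPQ sQS)); apply: mem_morphpre => //.
  by change (coset P (psi q) \in Q / P); rewrite -gpsi // -gQ imset_f // mem_quotient.
Qed.


Lemma Q_closed A B f x : hom A B f -> x \in A -> x \in Q -> f x \in Q.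
Proof.
move=> h Ax Qx; case: nP => _ /(_ _ _ _ h) [A1 [B1 [g [hg sAA1 sPA1 eqg _]]]].
have gA1 : group_set A1 by case: (homP Hfs hg) => [[]].
have [R1 [R2 [psi [_ _ dP pQ _]]]] := quot_ext (A:=group gA1) hg sPA1.
have A1x : x \in A1 := subsetP sAA1 x Ax.
rewrite -eqg //; have := dP x A1x; set d := _ * _ => Pd.
have -> : g x = psi x * d^-1 by rewrite /d invMg invgK mulKVg.
by rewrite groupM ?groupV ?pQ // (subsetP sPQ).
Qed.

Lemma nQS : S \subset 'N(Q).
Proof.
apply/subsetP => s Ss; rewrite inE; apply/subsetP => _ /imsetP[z Qz ->].
exact: Q_closed (conj_hom Ss) (subsetP sQS z Qz) Qz.
Qed.

Lemma crux_gen (A C W : {group gT}) f q r :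
  hom A C f -> f @: A = C -> fully_normalized S hom C ->
  q \in 'N_S(A) -> r \in 'N_S(C) -> W \subset C ->
  (forall g, hom C C g -> forall w, w \in W -> g w \in W) ->
  (forall x, x \in A -> (f x)^-1 * (f (x ^ q)) ^ r^-1 \in W) ->
  (forall x, x \in A -> f x \in W -> (f (x ^ q)) ^ r^-1 = f x) ->
  q \in Nphi S A f.
Proof.
move=> h fAC fnC /setIP[Sq Nq] /setIP[Sr Nr] sWC clW H1 H2.
have [[_ _] [sAS sCS] fM finj _] := homP Hfs h.
have [fi [hfi c1 c2]] := hom_inv Hfs h; rewrite fAC in hfi c2.
have hq : hom A A (fun x => x ^ q).
  by apply: (hom_conj Hfs sAS sAS Sq); rewrite (normP Nq).
have hr : hom C C (fun x => x ^ r^-1).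
  by apply: (hom_conj Hfs sCS sCS (groupVr Sr)); rewrite (normP (groupVr Nr)).
pose fb := fun y => (f ((fi y) ^ q)) ^ r^-1.
have hfb : hom C C fb := hom_comp Hfs (hom_comp Hfs (hom_comp Hfs hfi hq) h) hr.
have [_ _ fbM fbinj sfb] := homP Hfs hfb.
pose b := perm_in fbinj sfb.
have bE : {in C, b =1 fb} := perm_inE fbinj sfb.
have Ab : b \in Aut C.
  rewrite inE perm_in_on /=; apply/morphicP => x y Cx Cy.
  by rewrite !bE ?groupM // fbM.
have hb : hom C C b by apply: (hom_eq Hfs hfb) => y Cy; rewrite bE.
have bS := stab_AutS Hsat pS sCS fnC sWC clW Ab hb.
have fbf x : x \in A -> fb (f x) = (f (x ^ q)) ^ r^-1 by move=> Ax; rewrite /fb c1.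
have /setIdP[_ /existsP[h0 /andP[/setIP[Sh0 Nh0] /forallP Hh0]]] : b \in AutS S C.
  apply: bS.
    move=> y Cy; have Ay : fi y \in A := hom_in Hfs hfi Cy.
    by rewrite bE // -{1}(c2 y Cy) /fb; apply: H1.
  move=> w Ww; have Cw := subsetP sWC w Ww.
  have Aw : fi w \in A := hom_in Hfs hfi Cw.
  by rewrite bE // /fb H2 ?c2.
apply/setIdP; split; first by rewrite inE Sq Nq.
apply/existsP; exists (h0 * r).
have NS : h0 * r \in 'N_S(C) by rewrite groupM // inE ?Sh0 ?Sr.
rewrite fAC NS /=; apply/forallP => x; apply/implyP => Ax.
have Cfx : f x \in C by rewrite -fAC imset_f.
move: (implyP (Hh0 (f x)) Cfx); rewrite bE // fbf // => /eqP e.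
by rewrite conjgM -e conjgKV.
Qed.


Lemma crux_ab (A C : {group gT}) f q : abelian Q ->
  hom A C f -> f @: A = C -> fully_normalized S hom C ->
  q \in 'N_Q(A) -> q \in Nphi S A f.
Proof.
move=> abQ h fAC fnC /setIP[Qq Nq].
have [[_ _] [sAS sCS] fM finj _] := homP Hfs h.
have [fi [hfi c1 c2]] := hom_inv Hfs h; rewrite fAC in hfi c2.
have Sq := subsetP sQS q Qq.
have NqA : q \in 'N_S(A) by rewrite inE Sq.
apply: (crux_gen (W := (C :&: Q)%G) (r := 1) h fAC fnC NqA (group1 _) (subsetIl _ _)).
- move=> g hg w /setIP[Cw Qw]; rewrite inE (hom_in Hfs hg Cw).
  exact: Q_closed hg Cw Qw.
- move=> x Ax; rewrite invg1 conjg1.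
  have Axq : x ^ q \in A by rewrite memJ_norm.
  have Sx := subsetP sAS x Ax.
  rewrite -(homV Hfs h Ax) -fM ?groupV //.
  have Ak : x^-1 * x ^ q \in A by rewrite groupM ?groupV.
  rewrite inE (hom_in Hfs h Ak); apply: Q_closed h Ak _.
  have -> : x^-1 * x ^ q = (q^-1) ^ x * q by rewrite !conjgE !mulgA.
  by rewrite groupM // memJ_norm ?groupV // (subsetP nQS).
- move=> x Ax /setIP[_ Qfx]; rewrite invg1 conjg1.
  have Qx : x \in Q by rewrite -(c1 x Ax); apply: Q_closed hfi _ Qfx; rewrite -fAC imset_f.
  have cxq : commute x q by apply: (centsP abQ).
  by rewrite conjgE cxq mulKg.
Qed.

Lemma crux_c (A C : {group gT}) f q :
  (forall s z, s \in S -> z \in P -> z ^ s = z) ->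
  hom A C f -> f @: A = C -> fully_normalized S hom C -> P \subset A ->
  q \in 'N_Q(A) -> q \in Nphi S A f.
Proof.
move=> cP h fAC fnC sPA /setIP[Qq Nq].
have [[_ _] [sAS sCS] fM finj _] := homP Hfs h.
have Sq := subsetP sQS q Qq.
have [R1 [R2 [psi [hpsi [sAR1 sQR1] dP pQ sR2S]]]] := quot_ext h sPA.
have R1q := subsetP sQR1 q Qq.
pose r := psi q.
have Sr : r \in S := subsetP sR2S _ (hom_in Hfs hpsi R1q).
have sPC : P \subset C by rewrite -fAC -(hom_P h sPA) imsetS.
pose e := fun x => ((f x)^-1 * psi x) * ((f (x ^ q))^-1 * psi (x ^ q))^-1.
have Pe x : x \in A -> e x \in P.
  by move=> Ax; rewrite groupM ?groupV ?dP // memJ_norm.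
have E x : x \in A -> f (x ^ q) = (f x) ^ r * e x.
  move=> Ax; have Axq : x ^ q \in A by rewrite memJ_norm.
  have R1x := subsetP sAR1 x Ax.
  have cd : ((f x)^-1 * psi x) ^ r = (f x)^-1 * psi x by apply: cP => //; apply: dP.
  rewrite /e (homJ Hfs hpsi R1x R1q) -/r.
  move: cd; set d := (f x)^-1 * psi x => cd.
  have -> : psi x = f x * d by rewrite /d mulKVg.
  clearbody d; rewrite conjMg cd; set yr := f x ^ r; set F := f (x ^ q).
  clearbody yr F.
  by rewrite (invMg F^-1) (invMg yr d) invgK !mulgA mulgK mulgV mul1g.
have NrC : r \in 'N(C).
  rewrite inE; apply/subsetP => _ /imsetP[y Cy ->].
  move: Cy; rewrite -fAC => /imsetP[x Ax ->].
  have Axq : x ^ q \in A by rewrite memJ_norm.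
  have -> : f x ^ r = f (x ^ q) * (e x)^-1 by rewrite E // mulgK.
  rewrite fAC groupM ?groupV ?(hom_in Hfs h Axq) //.
  exact: (subsetP sPC _ (Pe x Ax)).
have NqA : q \in 'N_S(A) by rewrite inE Sq.
have NrS : r \in 'N_S(C) by rewrite inE Sr.
apply: (crux_gen (W := P) h fAC fnC NqA NrS sPC).
- by move=> g hg w Pw; apply: P_closed hg (subsetP sPC w Pw) Pw.
- move=> x Ax; rewrite E // conjMg conjgK cP ?groupV ?Pe //.
  by rewrite mulKg Pe.
- move=> x Ax Pfx.
  have : f x \in f @: P by rewrite (hom_P h sPA).
  case/imsetP => z Pz /finj e1.
  have Px : x \in P by rewrite e1 // (subsetP sPA).
  by rewrite (cP _ _ Sq Px) cP ?groupV.
Qed.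


Hypothesis Hcase : abelian Q \/ (forall s z, s \in S -> z \in P -> z ^ s = z).

Lemma crux (A C : {group gT}) f q :
  hom A C f -> f @: A = C -> fully_normalized S hom C -> P \subset A ->
  q \in 'N_Q(A) -> q \in Nphi S A f.
Proof.
move=> h fAC fnC sPA Nq; case: Hcase => [abQ|cP].
  exact: crux_ab abQ h fAC fnC Nq.
exact: crux_c cP h fAC fnC sPA Nq.
Qed.

Lemma hom_Q A B f : hom A B f -> Q \subset A -> f @: Q = Q.
Proof.
move=> h sQA; apply/eqP; rewrite eqEcard; apply/andP; split.
  by apply/subsetP => _ /imsetP[x Qx ->]; apply: Q_closed h (subsetP sQA x Qx) Qx.
have [_ _ _ inj _] := homP Hfs h.
by rewrite card_in_imset // => x y /(subsetP sQA) ? /(subsetP sQA) ?; apply: inj.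
Qed.

Definition Ext (A : {set gT}) (f : gT -> gT) :=
  exists A' B' g, [/\ hom A' B' g, A \subset A', Q \subset A',
                      {in A, g =1 f} & g @: Q = Q].

Lemma fn_conj (B : {group gT}) : B \subset S ->
  exists (C : {group gT}) chi, [/\ hom B C chi, chi @: B = C & fully_normalized S hom C].
Proof.
move=> sBS.
suff H n : forall (X : {group gT}) chi, hom B X chi -> chi @: B = X ->
    #|S| - #|'N_S(X)| <= n ->
    exists (C : {group gT}) chi, [/\ hom B C chi, chi @: B = C & fully_normalized S hom C].
  have e : B :^ 1 \subset B by rewrite conjsg1.
  have h1 := hom_conj Hfs sBS sBS (group1 _) e.
  apply: (H #|S| B _ h1); last exact: leq_subr.
  by rewrite -[RHS]imset_id; apply: eq_in_imset => x _; rewrite conjg1.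
elim: n => [|n IH] X chi hX eX hn.
  exists X, chi; split => // g _.
  rewrite leqn0 subn_eq0 in hn.
  exact: leq_trans (subset_leq_card (subsetIl _ _)) hn.
case: (classic (fully_normalized S hom X)) => [fX|fX]; first by exists X, chi.
have [g Hg] := not_all_ex_not _ _ fX.
have [hg lt] := imply_to_and _ _ Hg.
have hg' := hom_im Hfs hg; pose X' := group (hom_imG Hfs hg).
have hc : hom B X' (g \o chi) := hom_comp Hfs hX hg'.
apply: (IH X' (g \o chi) hc); first by rewrite imset_comp eX.
have : #|'N_S(g @: X)| <= #|S| by apply: subset_leq_card; apply: subsetIl.
rewrite /= in lt *; move/negP: lt; rewrite -ltnNge => lt _.
have h2 := leq_sub2l #|S| lt; rewrite subnS in h2.
by apply: leq_trans h2 _; rewrite -subn1 leq_subLR add1n.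
Qed.


Definition IHp (A : {set gT}) := forall (A' : {group gT}) B' f', hom A' B' f' ->
  P \subset A' -> #|A| < #|A'| -> Ext A' f'.

Lemma ext1 (A C : {group gT}) f : IHp A ->
  hom A C f -> f @: A = C -> fully_normalized S hom C -> P \subset A -> Ext A f.
Proof.
move=> IH h fAC fnC sPA.
have [sQA|nsQA] := boolP (Q \subset A).
  by exists A, C, f; split => //; apply: hom_Q h sQA.
have [[_ _] [sAS sCS] fM _ _] := homP Hfs h.
have fcC : fully_centralized S hom (f @: A).
  by rewrite fAC; case: Hsat => _ /(_ C sCS fnC) [].
have hS : hom A S f := hom_wid Hfs h (groupP S) sCS (subxx _).
have [g [hg eqg]] : exists g, hom (Nphi S A f) S g /\ {in A, g =1 f}.
  by case: Hsat => _ _ Hext; apply: Hext hS fcC.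
have gN : group_set (Nphi S A f) by case: (homP Hfs hg) => [[]].
pose N := group gN.
have sAN : A \subset N.
  apply/subsetP => a Aa; apply/setIdP; split.
    by rewrite inE (subsetP sAS a Aa) (subsetP (normG A) a Aa).
  apply/existsP; exists (f a).
  have Cfa : f a \in C by rewrite -fAC imset_f.
  rewrite fAC inE (subsetP sCS _ Cfa) (subsetP (normG C) _ Cfa) /=.
  by apply/forall_inP => x Ax; rewrite (homJ Hfs h Ax Aa).
have nAQ : A \subset 'N(Q) := subset_trans sAS nQS.
pose D := 'N_(A <*> Q)(A).
have sDN : D \subset N.
  apply/subsetP => y /setIP[]; rewrite (norm_joinEl nAQ) => /mulsgP[a q Aa Qq ->] Nay.
  have Nq : q \in 'N(A).
    by rewrite -(mulKg a q) groupM ?groupV // (subsetP (normG A)).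
  have NQq : q \in 'N_Q(A) by rewrite inE Qq.
  have Nq' : q \in N := crux h fAC fnC sPA NQq.
  exact: (@groupM _ N _ _ (subsetP sAN a Aa) Nq').
have hD : hom D S g := hom_res Hfs hg (groupP _) sDN.
have sAD : A \subset D by rewrite subsetI joing_subl normG.
have ltAD : #|A| < #|D|.
  apply: proper_card; apply: nilpotent_proper_norm.
    apply: (@pgroup_nil _ p); apply: pgroupS pS.
    by rewrite join_subG sAS sQS.
  rewrite properEneq joing_subl andbT; apply: contraNneq nsQA => ->.
  exact: joing_subr.
have [A2 [B2 [g2 [hg2 sDA2 sQA2 eqg2 g2Q]]]] := IH D S g hD (subset_trans sPA sAD) ltAD.
exists A2, B2, g2; split => //; first exact: subset_trans sAD sDA2.
by move=> x Ax; rewrite eqg2 ?(subsetP sAD) // eqg.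
Qed.


Lemma step (A : {group gT}) B f : IHp A -> hom A B f -> P \subset A -> Ext A f.
Proof.
move=> IH h sPA.
have [sQA|nsQA] := boolP (Q \subset A).
  by exists A, B, f; split => //; apply: hom_Q h sQA.
have hB1 := hom_im Hfs h; pose B1 := group (hom_imG Hfs h).
have [[_ _] [sAS sB1S] fM _ _] := homP Hfs hB1.
have [C [chi [hchi eC fnC]]] := fn_conj (B := B1) sB1S.
have hth : hom A C (chi \o f) := hom_comp Hfs hB1 hchi.
have eth : (chi \o f) @: A = C by rewrite imset_comp.
have [A1 [Bx1 [g1 [hg1 sAA1 sQA1 eqg1 g1Q]]]] := ext1 IH hth eth fnC sPA.
have sPB1 : P \subset B1 by rewrite /= -(hom_P h sPA) imsetS.
have IHB : IHp B1.
  move=> A' B' f' hA' sPA' lt; apply: IH hA' sPA' _.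
  by rewrite -(hom_card Hfs h).
have [A2 [Bx2 [g2 [hg2 sBA2 sQA2 eqg2 g2Q]]]] := ext1 IHB hchi eC fnC sPB1.
pose AQ := (A <*> Q)%G; pose BQ := (B1 <*> Q)%G.
have gA1 : group_set A1 by case: (homP Hfs hg1) => [[]].
have gA2 : group_set A2 by case: (homP Hfs hg2) => [[]].
have sAQ : AQ \subset A1 by rewrite (join_subG _ _ (group gA1)) sAA1 sQA1.
have sBQ : BQ \subset A2 by rewrite (join_subG _ _ (group gA2)) sBA2 sQA2.
have h1 := hom_im Hfs (hom_res Hfs hg1 (groupP AQ) sAQ).
have h2 := hom_im Hfs (hom_res Hfs hg2 (groupP BQ) sBQ).
have [g2i [h2i c1 c2]] := hom_inv Hfs h2.
have [_ _ g1M _ _] := homP Hfs h1.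
have [[_ gY2] _ _ _ _] := homP Hfs h2.
pose Y2 := group gY2.
have sQY2 : Q \subset Y2.
  rewrite -{1}g2Q; apply: imsetS; exact: joing_subr.
have sX1 : g1 @: AQ \subset Y2.
  apply/subsetP => y /imsetP[z AQz ->]; move: AQz.
  rewrite /= (norm_joinEl (subset_trans sAS nQS)) => /mulsgP[a q Aa Qq ->].
  have AQa : a \in AQ := subsetP (joing_subl _ _) a Aa.
  have AQq : q \in AQ := subsetP (joing_subr _ _) q Qq.
  rewrite g1M // (@groupM _ Y2) //.
    have B1fa : f a \in B1 by apply: imset_f.
    rewrite eqg1 //= -eqg2 //; apply: imset_f.
    exact: (subsetP (joing_subl _ _) _ B1fa).
  by apply: (subsetP sQY2); rewrite -g1Q imset_f.
have h2i' : hom (g1 @: AQ) BQ g2i := hom_res Hfs h2i (hom_imG Hfs h1) sX1.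
have hG := hom_comp Hfs h1 h2i'.
have sQBQ : Q \subset BQ := joing_subr _ _.
exists (gval AQ), (gval BQ), (g2i \o g1); split => //.
- exact: joing_subl.
- exact: joing_subr.
- move=> x Ax /=.
  have B1fx : f x \in B1 by apply: imset_f.
  rewrite eqg1 //= -eqg2 // c1 //.
  exact: (subsetP (joing_subl _ _) _ B1fx).
rewrite imset_comp g1Q -{1}g2Q -imset_comp -[RHS]imset_id.
by apply: eq_in_imset => x Qx /=; rewrite c1 // (subsetP sQBQ).
Qed.

Lemma claim n (A : {group gT}) B f : hom A B f -> P \subset A ->
  #|S| - #|A| <= n -> Ext A f.
Proof.
elim: n A B f => [|n IH] A B f h sPA hn; apply: step h sPA.
  move=> A' B' f' h' _ lt.
  have [[_ _] [sA'S _] _ _ _] := homP Hfs h'.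
  rewrite leqn0 subn_eq0 in hn.
  by have := leq_trans (subset_leq_card sA'S) hn; rewrite leqNgt lt.
move=> A' B' f' h' sPA' lt; apply: IH h' sPA' _.
have h2 := leq_sub2l #|S| lt; rewrite subnS in h2.
by apply: leq_trans h2 _; rewrite -subn1 leq_subLR add1n.
Qed.

End Main.


Unset Implicit Arguments.
Theorem lemma1p19 (gT : finGroupType) (p : nat) (S : {group gT})
    (hom : {set gT} -> {set gT} -> (gT -> gT) -> Prop) (P Q : {group gT}) :
  prime p -> p.-group S -> saturated_fusion_system p S hom ->
  P \subset Q -> Q \subset S ->
  fnormal S hom P ->
  fnormal (S / P) (quotient_hom P hom) (Q / P) ->
  abelian Q \/ (exists Z : {group gT}, is_fcenter S hom Z /\ P \subset Z) ->
  fnormal S hom Q.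
Proof.
move=> _ pS Hsat sPQ sQS nP nQP Hc.
have Hfs : is_fusion_system S hom by case: Hsat.
have Hcase : abelian Q \/ (forall s z, s \in S -> z \in P -> z ^ s = z).
  case: Hc => [abQ|[Z [[[sZS HZ] _] sPZ]]]; [by left | right].
  move=> s z Ss Pz.
  have [A' [B' [g [_ sSA' sZA' eqg gid]]]] := HZ _ _ _ (conj_hom Hsat Ss).
  have Zz := subsetP sPZ z Pz.
  have Sz := subsetP sZS z Zz.
  by rewrite -(eqg z Sz) gid.
split => // A B f h.
have [_ HnP] := nP.
have [A1 [B1 [g1 [hg1 sAA1 sPA1 eqg1 _]]]] := HnP _ _ _ h.
have gA1 : group_set A1 by case: (homP Hfs hg1) => [[]].
have [A2 [B2 [g [hg sA1A2 sQA2 eqg gQ]]]] :=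
  claim pS Hsat sPQ sQS nP nQP Hcase (A := group gA1) hg1 sPA1 (leqnn _).
exists A2, B2, g; split => //; first exact: subset_trans sAA1 sA1A2.
by move=> x Ax; rewrite eqg ?(subsetP sAA1) // eqg1.
Qed.
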